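(* Let $V_\theta$ be a real vector space of dimension $2$ and let $M\subset V_\theta\times[0,1]$ be a dichotomous item response hypersurface with associated function $f:V_\theta\to[0,1]$. Then there exists a nonzero $v\in V_\theta$ such that $f$ is constant on the line $\mathbb{R}\cdot v=\{\lambda v:\lambda\in\mathbb{R}\}$.
   Context: A dichotomous item response hypersurface (IRHS) is a $D=\dim V_\theta$ dimensional smooth submanifold $M$ of $V_\theta\times[0,1]$ such that for any two vectors $v,w\in V_\theta$, the intersection of $(w+\mathbb{R}\cdot v)\times[0,1]$ with $M$ is the graph of a monotonic function $w+\mathbb{R}\cdot v\to[0,1]$, where $w+\mathbb{R}\cdot v=\{w+\lambda v:\lambda\in\mathbb{R}\}$. A function $g:w+\mathbb{R}\cdot v\to[0,1]$ is monotonic if either $g(w+\lambda v)\le g(w+\mu v)$ for all $\lambda\le\mu$, or $g(w+\lambda v)\ge g(w+\mu v)$ for all $\lambda\le\mu$. Taking $v=0$ shows $M$ is the graph of a function $f:V_\theta\to[0,1]$, the associated function. *)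

(* Defs.v *)
From HB Require Import structures.
From mathcomp Require Import all_boot all_order all_algebra.
From mathcomp Require Import all_classical all_reals all_analysis.
Set Implicit Arguments. Unset Strict Implicit. Unset Printing Implicit Defensive.
Import Order.TTheory GRing.Theory Num.Theory.
Import numFieldNormedType.Exports.
Local Open Scope classical_set_scope.
Local Open Scope ring_scope.

Definition Vth (R : realType) := 'rV[R]_2.

(* Ambient space V_theta x R, in which V_theta x [0,1] sits. *)
Definition Amb (R : realType) := ('rV[R]_2 * R)%type.

Definition iter_dderiv (R : realType) (F : Amb R -> R) (ws : seq (Amb R))
  : Amb R -> R :=
  foldr (fun w g => fun x => derive g x w) F ws.

Definition smooth_on (R : realType) (U : set (Amb R)) (F : Amb R -> R) : Prop :=
  forall (ws : seq (Amb R)) (x : Amb R), U x ->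
    {for x, continuous (iter_dderiv F ws)} /\
    forall w : Amb R, derivable (iter_dderiv F ws) x w.

(* M is a smooth embedded submanifold of dimension D = 2 (i.e. a smooth
   hypersurface) of V_theta x R: locally the regular zero set of a smooth
   real function. *)
Definition smooth_hypersurface (R : realType) (M : set (Amb R)) : Prop :=
  forall p, M p ->
    exists (U : set (Amb R)) (F : Amb R -> R),
      [/\ open U, U p, smooth_on U F,
          (forall x, U x -> (M x <-> F x = 0)) &
          (forall x, U x -> M x -> exists w : Amb R, derive F x w != 0)].

Definition line (R : realType) (w v : Vth R) : set (Vth R) :=
  [set x | exists lam : R, x = w + lam *: v].

Definition IRHS (R : realType) (M : set (Amb R)) : Prop :=
  [/\ (forall x y, M (x, y) -> 0 <= y <= 1),
      smooth_hypersurface M &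
      forall v w : Vth R,
        exists g : Vth R -> R,
          (forall x, line w v x -> forall y, M (x, y) <-> y = g x) /\
          ((forall lam mu : R, lam <= mu -> g (w + lam *: v) <= g (w + mu *: v))
           \/ (forall lam mu : R, lam <= mu -> g (w + mu *: v) <= g (w + lam *: v)))].

(* Main.v *)
Require Import Defs.
From HB Require Import structures.
From mathcomp Require Import all_boot all_order all_algebra.
From mathcomp Require Import all_classical all_reals all_analysis.
From mathcomp Require Import ring lra.
Import Order.TTheory GRing.Theory Num.Theory.
Import numFieldNormedType.Exports.
Local Open Scope classical_set_scope.
Local Open Scope ring_scope.

Section OneD.
Variable R : realType.
Variable G : Amb R -> R.

Lemma dline_is_derive (q w : Amb R) (t : R) :
  derivable G (q + t *: w) w ->
  is_derive t 1 (fun s : R => G (q + s *: w)) (derive G (q + t *: w) w).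
Proof.
move=> hd.
have E : (fun h : R => h^-1 *: (((fun s => G (q + s *: w)) \o shift t) (h *: (1:R))
           - G (q + t *: w)))
       = (fun h : R => h^-1 *: ((G \o shift (q + t *: w)) (h *: w) - G (q + t *: w))).
  apply/funext => h /=; congr (_ *: (G _ - _)).
  rewrite /shift /= -[h%:A]/(h * 1) mulr1 scalerDl addrCA //.
have hd1 : derivable (fun s : R => G (q + s *: w)) t 1 by rewrite /derivable E.
have -> : derive G (q + t *: w) w = derive (fun s : R => G (q + s *: w)) t 1.
  by rewrite /derive E.
exact: derivableP.
Qed.

Lemma dline_cont (q w : Amb R) (t : R) :
  {for q + t *: w, continuous G} -> {for t, continuous (fun s : R => G (q + s *: w))}.
Proof.
move=> hc.
have hl : {for t, continuous (fun s : R => q + s *: w)}.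
  apply: cvgD; first exact: cvg_cst.
  apply: cvgZl. exact: cvg_id.
exact: (continuous_comp hl hc).
Qed.

End OneD.
Lemma near_lt {R : realType} {T : topologicalType} {h : T -> R} {x c} :
  {for x, continuous h} -> h x < c -> \forall y \near x, h y < c.
Proof. by move=> hc hx; apply: (cvgr_lt _ hc). Qed.

Lemma near_gt {R : realType} {T : topologicalType} {h : T -> R} {x c} :
  {for x, continuous h} -> c < h x -> \forall y \near x, c < h y.
Proof. by move=> hc hx; apply: (cvgr_gt _ hc). Qed.

Lemma minmax_of {R : realType} (a b v : R) :
  (a <= v <= b) \/ (b <= v <= a) -> Num.min a b <= v <= Num.max a b.
Proof.
by case=> /andP[h1 h2]; rewrite ge_min le_max ?h1 ?h2 ?orbT.
Qed.

Lemma minmax_neg {R : realType} (a b : R) : a * b < 0 -> Num.min a b <= 0 <= Num.max a b.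
Proof.
move=> h; apply: minmax_of.
case: (lerP a 0) => ha; case: (lerP b 0) => hb.
- exfalso; nra.
- by left; apply/andP; split; lra.
- by right; apply/andP; split; lra.
- exfalso; nra.
Qed.

Section Core.
Variables (R : realType) (M : set (Amb R)) (f : 'rV[R]_2 -> R).
Hypothesis hf : forall x y, M (x,y) <-> y = f x.
Variables (G : Amb R -> R) (w : Amb R) (x0 : 'rV[R]_2) (r0 : R).
Let p : Amb R := (x0, f x0).
Hypothesis r0pos : 0 < r0.
Hypothesis Gcont : forall q, `|p - q| < r0 -> {for q, continuous G}.
Hypothesis Gder : forall q, `|p - q| < r0 -> derivable G q w /\ 0 < derive G q w.
Hypothesis GM : forall q, `|p - q| < r0 -> (M q <-> G q = 0).

Let rho0 := r0 / 2.
Let delta0 := r0 / (2 * (`|w| + 1)).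

Lemma rho0pos : 0 < rho0. Proof. by rewrite /rho0 divr_gt0. Qed.
Lemma delta0pos : 0 < delta0.
Proof. by rewrite /delta0 divr_gt0 // mulr_gt0 // ltr_wpDl. Qed.

Lemma box k t : `|k| < rho0 -> `|t| <= delta0 -> `|p - (p + k + t *: w)| < r0.
Proof.
move=> hk ht.
have -> : p - (p + k + t *: w) = - (k + t *: w) by rewrite -addrA opprD addrA subrr add0r.
rewrite normrN.
rewrite (le_lt_trans (ler_normD _ _)) //.
rewrite normrZ.
have hw : 0 <= `|w| by [].
have : `|t| * `|w| <= delta0 * `|w| by rewrite ler_wpM2r.
have : delta0 * `|w| < r0 / 2.
  rewrite /delta0 mulrAC ltr_pdivrMr ?mulr_gt0 ?ltr_wpDl //.
  have -> : r0 / 2 * (2 * (`|w| + 1)) = r0 * (`|w| + 1) by field.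
  by rewrite mulrDr mulr1 ltrDl.
move: hk; rewrite /rho0 => hk h1 h2.
have := ltr_leD hk (le_trans h2 (ltW h1)).
by rewrite -splitr.
Qed.


Lemma inbox {k t1 t2 t} : `|k| < rho0 -> -delta0 <= t1 -> t2 <= delta0 ->
  t1 <= t <= t2 -> `|p - (p + k + t *: w)| < r0.
Proof.
move=> hk h1 h2 /andP[a b]; apply: box => //; rewrite ler_norml; apply/andP; split; lra.
Qed.

Lemma SM {k t1 t2} : `|k| < rho0 -> -delta0 <= t1 -> t1 < t2 -> t2 <= delta0 ->
  G (p + k + t1 *: w) < G (p + k + t2 *: w).
Proof.
move=> hk h1 h12 h2.
have hD : forall x, x \in `]t1, t2[ -> is_derive x 1 (fun s => G (p + k + s *: w))
    (derive G (p + k + x *: w) w).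
  move=> x; rewrite in_itv /= => /andP[a b]. apply: dline_is_derive.
  apply: (Gder _ (inbox hk h1 h2 _)).1. by rewrite !ltW.
have hC : {within `[t1, t2], continuous (fun s => G (p + k + s *: w))}.
  apply: continuous_in_subspaceT => x; rewrite in_setE /= in_itv /= => hx.
  apply: dline_cont. exact: Gcont _ (inbox hk h1 h2 hx).
have [c hc E] := MVT h12 hD hC.
rewrite -subr_gt0 E; apply: mulr_gt0; last by rewrite subr_gt0.
move: hc; rewrite in_itv /= => /andP[a b].
apply: (Gder _ (inbox hk h1 h2 _)).2. by rewrite !ltW.
Qed.


Lemma Gk_cont {t} {k1 : Amb R} : `|k1| < rho0 -> `|t| <= delta0 ->
  {for k1, continuous (fun k => G (p + k + t *: w))}.
Proof.
move=> hk ht.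
have hl : {for k1, continuous (fun k : Amb R => p + k + t *: w)}.
  apply: cvgD; last exact: cvg_cst.
  apply: cvgD; [exact: cvg_cst| exact: cvg_id].
apply: (continuous_comp hl); apply: Gcont; exact: box.
Qed.

Lemma near_rho {k1 : Amb R} : `|k1| < rho0 -> \forall k \near k1, `|k| < rho0.
Proof. move=> hk; apply: near_lt => //; exact: norm_continuous. Qed.

Lemma ZF {k1 : Amb R} {t1 t2} : `|k1| < rho0 -> -delta0 <= t1 -> t1 <= t2 -> t2 <= delta0 ->
  G (p + k1 + t1 *: w) < 0 -> 0 < G (p + k1 + t2 *: w) ->
  \forall k \near k1, `|k| < rho0 /\ exists2 t, t1 <= t <= t2 & G (p + k + t *: w) = 0.
Proof.
move=> hk h1 h12 h2 g1 g2.
have ht1 : `|t1| <= delta0 by rewrite ler_norml; apply/andP; split; lra.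
have ht2 : `|t2| <= delta0 by rewrite ler_norml; apply/andP; split; lra.
have n1 := near_lt (Gk_cont hk ht1) g1.
have n2 := near_gt (Gk_cont hk ht2) g2.
move: (near_rho hk) n1 n2; apply: filterS3 => k nk a b; split => //.
have hC : {within `[t1, t2], continuous (fun s => G (p + k + s *: w))}.
  apply: continuous_in_subspaceT => x; rewrite in_setE /= in_itv /= => hx.
  apply: dline_cont. exact: Gcont _ (inbox nk h1 h2 hx).
have hv : Num.min (G (p + k + t1 *: w)) (G (p + k + t2 *: w)) <= 0 <=
          Num.max (G (p + k + t1 *: w)) (G (p + k + t2 *: w)).
  by rewrite ge_min le_max (ltW a) (ltW b) orbT.
have [c hc E] := IVT h12 hC hv.
by exists c => //; move: hc; rewrite in_itv.
Qed.

Lemma Mp : M p. Proof. by rewrite /p hf. Qed.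

Lemma Gp0 : G p = 0.
Proof. by apply/(GM _ _).1; [rewrite subrr normr0 | exact: Mp]. Qed.

Lemma Gp0' : G (p + 0 + 0 *: w) = 0.
Proof. by rewrite addr0 scale0r addr0 Gp0. Qed.

Lemma uniqZ {k t t'} : `|k| < rho0 -> `|t| <= delta0 -> `|t'| <= delta0 ->
  G (p + k + t *: w) = 0 -> G (p + k + t' *: w) = 0 -> t = t'.
Proof.
move=> hk; rewrite !ler_norml => /andP[a b] /andP[c d] z z'.
have dp := delta0pos.
case: (ltgtP t t') => // h.
  by have := SM hk a h d; rewrite z z' ltxx.
by have := SM hk c h b; rewrite z z' ltxx.
Qed.

Lemma tau_ex : exists rho1, 0 < rho1 /\ forall k : Amb R, `|k| < rho1 ->
  `|k| < rho0 /\ exists2 t, -(delta0/2) <= t <= delta0/2 & G (p + k + t *: w) = 0.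
Proof.
have dp := delta0pos; have rp := rho0pos.
have h0 : `|0 : Amb R| < rho0 by rewrite normr0.
have g1 : G (p + 0 + (-(delta0/2)) *: w) < 0.
  rewrite -Gp0'; apply: SM => //; lra.
have g2 : 0 < G (p + 0 + (delta0/2) *: w).
  rewrite -Gp0'; apply: SM => //; lra.
have := ZF h0 _ _ _ g1 g2.
move=> /(_ ltac:(lra) ltac:(lra) ltac:(lra)).
move=> /nbhs_normP [e /= e0 he].
exists e; split => // k hk; apply: he; by rewrite /ball_ /= sub0r normrN.
Qed.

Lemma core_cont : {for x0, continuous f}.
Proof.
have dp := delta0pos; have rp := rho0pos.
have [rho1 [r1p hr1]] := tau_ex.
have ex : forall k : Amb R, exists t : R, `|k| < rho1 ->
    -(delta0/2) <= t <= delta0/2 /\ G (p + k + t *: w) = 0.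
  move=> k; case: (pselect (`|k| < rho1)) => hk.
  - by have [_ [t ht ht']] := hr1 k hk; exists t.
  - by exists 0.
have [tau htau] := choice ex.
have hr0 : forall k : Amb R, `|k| < rho1 -> `|k| < rho0 := fun k hk => (hr1 k hk).1.
have tauN : forall k, `|k| < rho1 -> `|tau k| <= delta0.
  move=> k hk; have [/andP[a b] _] := htau k hk.
  by rewrite ler_norml; apply/andP; split; lra.
have tau_cont : forall k1, `|k1| < rho1 -> {for k1, continuous tau}.
  move=> k1 hk1; apply/cvgrPdist_le => e e0.
  have [/andP[a1 b1] z1] := htau k1 hk1.
  set e' := Num.min e (delta0/2).
  have e'p : 0 < e' by rewrite lt_min e0 /=; lra.
  have e'1 : e' <= e by rewrite ge_min lexx.
  have e'2 : e' <= delta0/2 by rewrite ge_min lexx orbT.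
  have g1 : G (p + k1 + (tau k1 - e') *: w) < 0.
    by rewrite -z1; apply: (SM (hr0 _ hk1)); lra.
  have g2 : 0 < G (p + k1 + (tau k1 + e') *: w).
    by rewrite -z1; apply: (SM (hr0 _ hk1)); lra.
  have nz := ZF (t1 := tau k1 - e') (t2 := tau k1 + e') (hr0 _ hk1) ltac:(lra) ltac:(lra) ltac:(lra) g1 g2.
  have nr : \forall k \near k1, `|k| < rho1.
    by apply: near_lt => //; exact: norm_continuous.
  move: nz nr; apply: filterS2 => k [hk0 [t /andP[c d] zt]] hk.
  have [_ zk] := htau k hk.
  have ht : `|t| <= delta0 by rewrite ler_norml; apply/andP; split; lra.
  rewrite (uniqZ hk0 (tauN k hk) ht zk zt).
  by rewrite ler_norml; apply/andP; split; lra.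
have graph : forall h s, `|((h, s) : Amb R)| < rho1 ->
    f (x0 + h + tau (h, s) *: w.1) = f x0 + s + tau (h, s) * w.2.
  move=> h s hk; have [bd z] := htau _ hk.
  have inM : M (p + (h, s) + tau (h, s) *: w).
    by apply/(GM _ _).2 => //; apply: box (hr0 _ hk) (tauN _ hk).
  move: inM; have -> : p + (h, s) + tau (h, s) *: w =
     (x0 + h + tau (h, s) *: w.1, f x0 + s + tau (h, s) * w.2).
    by move: (w) => [a b].
  by move/hf => ->.
have hn : forall (h : 'rV[R]_2) (s : R), `|((h, s) : Amb R)| = Num.max `|h| `|s|.
  by move=> h s; rewrite prod_normE.
have tau00 : tau (0, 0) = 0.
  have h0 : `|0 : Amb R| < rho1 by rewrite normr0.
  have [_ z] := htau _ h0.
  have h00 : `|0:R| <= delta0 by rewrite normr0 ltW.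
  exact: (uniqZ (hr0 _ h0) (tauN _ h0) h00 z Gp0').
have vn : forall s : R, `|s| < rho1 -> `|((0, s) : Amb R)| < rho1.
  by move=> s hs; rewrite hn gt_max normr0 r1p hs.
have inj : forall s s', `|s| < rho1 -> `|s'| < rho1 -> tau (0, s) = tau (0, s') -> s = s'.
  move=> s s' hs hs' e.
  have := graph 0 s (vn _ hs); have := graph 0 s' (vn _ hs').
  rewrite e => ->.
  by move=> /addIr/addrI.
have gcont : forall (h : 'rV[R]_2) s, `|((h, s) : Amb R)| < rho1 ->
    {for s, continuous (fun s' => tau (h, s'))}.
  move=> h s hk.
  have hl : {for s, continuous (fun s' : R => ((h, s') : Amb R))}.
    by apply: (@cvg_pair _ _ _ _ (nbhs h) (nbhs s)); [exact: cvg_cst | exact: cvg_id].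
  exact: (continuous_comp hl (tau_cont _ hk)).
have opp : forall sg, 0 < sg -> sg < rho1 -> tau (0, sg) * tau (0, - sg) < 0.
  move=> sg s0 s1.
  have gC : forall a b, -sg <= a -> b <= sg ->
      {within `[a, b], continuous (fun s => tau (0, s))}.
    move=> a b ha hb; apply: continuous_in_subspaceT => x.
    rewrite in_setE /= in_itv /= => /andP[xa xb].
    apply: gcont; apply: vn; rewrite ltr_norml; apply/andP; split; lra.
  have hs1 : `|sg| < rho1 by rewrite gtr0_norm.
  have hs2 : `|- sg| < rho1 by rewrite normrN gtr0_norm.
  have h01 : `|0 : R| < rho1 by rewrite normr0.
  set A := tau (0, - sg); set B := tau (0, sg).
  have A0 : A != 0.
    apply/eqP => hA; have := inj _ _ hs2 h01; rewrite -/A hA tau00 => /(_ erefl).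
    lra.
  have B0 : B != 0.
    apply/eqP => hB; have := inj _ _ hs1 h01; rewrite -/B hB tau00 => /(_ erefl).
    lra.
  rewrite ltNge; apply/negP => hAB.
  have sgn : (0 < A /\ 0 < B) \/ (A < 0 /\ B < 0).
    move: A0 B0; rewrite !neq_lt => /orP[a|a] /orP[b|b].
    - by right.
    - by exfalso; nra.
    - by exfalso; nra.
    - by left.
  have ivt1 : forall v, Num.min 0 B <= v <= Num.max 0 B ->
      exists2 c, 0 <= c <= sg & tau (0, c) = v.
    move=> v hv.
    have hv' : Num.min (tau (0, 0)) (tau (0, sg)) <= v <= Num.max (tau (0, 0)) (tau (0, sg)).
      by rewrite tau00.
    have [c hc E] := IVT (ltW s0) (gC 0 sg ltac:(lra) ltac:(lra)) hv'.
    by exists c => //; move: hc; rewrite in_itv.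
  have ivt2 : forall v, Num.min A 0 <= v <= Num.max A 0 ->
      exists2 c, - sg <= c <= 0 & tau (0, c) = v.
    move=> v hv.
    have hv' : Num.min (tau (0, -sg)) (tau (0, 0)) <= v <= Num.max (tau (0, -sg)) (tau (0, 0)).
      by rewrite tau00.
    have [c hc E] := IVT (a:= -sg) (b:=0) ltac:(lra) (gC (-sg) 0 ltac:(lra) ltac:(lra)) hv'.
    by exists c => //; move: hc; rewrite in_itv.
  have cA : forall c, 0 <= c <= sg -> tau (0, c) = A -> False.
    move=> c /andP[c1 c2] e.
    have hc : `|c| < rho1 by rewrite ger0_norm //; lra.
    by have := inj _ _ hc hs2 e; lra.
  have cB : forall c, - sg <= c <= 0 -> tau (0, c) = B -> False.
    move=> c /andP[c1 c2] e.
    have hc : `|c| < rho1 by rewrite ler0_norm //; lra.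
    by have := inj _ _ hc hs1 e; lra.
  case: (lerP A B) => hab; case: sgn => [[a b]|[a b]].
  - have [c hc e] := ivt1 A (minmax_of 0 B A ltac:(left; apply/andP; split; lra)).
    exact: (cA c hc e).
  - have [c hc e] := ivt2 B (minmax_of A 0 B ltac:(left; apply/andP; split; lra)).
    exact: (cB c hc e).
  - have [c hc e] := ivt2 B (minmax_of A 0 B ltac:(right; apply/andP; split; lra)).
    exact: (cB c hc e).
  - have [c hc e] := ivt1 A (minmax_of 0 B A ltac:(right; apply/andP; split; lra)).
    exact: (cA c hc e).
apply/(@cvgrPdist_le _ _ _ _ (nbhs_filter x0)) => e e0.
have [sg [sgp [sg1 sg2]]] : exists sg, 0 < sg /\ sg <= e /\ sg <= rho1 / 2.
  exists (Num.min e (rho1 / 2)); split; first by rewrite lt_min e0 /=; lra.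
  by split; rewrite ge_min lexx ?orbT.
have P0 := opp sg sgp ltac:(lra).
have pc : forall s : R, `|s| < rho1 -> {for x0, continuous (fun x : 'rV[R]_2 => tau (x - x0, s))}.
  move=> s hs.
  have hl : {for x0, continuous (fun x : 'rV[R]_2 => ((x - x0, s) : Amb R))}.
    have h1 : (fun x : 'rV[R]_2 => x - x0) @ x0 --> x0 - x0.
      apply: (@cvgB _ _ _ _ (nbhs_filter x0)); [exact: cvg_id | exact: cvg_cst].
    have h2 : (fun x : 'rV[R]_2 => s) @ x0 --> s.
      exact: (@cvg_cst _ s _ _ (nbhs_filter x0)).
    exact: (@cvg_pair _ _ _ _ _ _ (nbhs_filter x0) _ _ _ _ h1 h2).
  apply: (continuous_comp hl); apply: tau_cont.
  by rewrite /= subrr hn normr0 gt_max r1p hs.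
have hr : rho1 / 2 < rho1 by lra.
have hs1 : `|sg| < rho1 by rewrite gtr0_norm //; exact: (le_lt_trans sg2 hr).
have hs2 : `|- sg| < rho1 by rewrite normrN gtr0_norm //; exact: (le_lt_trans sg2 hr).
have nPhi : \forall x \near x0, tau (x - x0, sg) * tau (x - x0, - sg) < 0.
  apply: near_lt; last by rewrite subrr.
  exact: cvgM (pc _ hs1) (pc _ hs2).
have nN : \forall x \near x0, `|x - x0| < rho1.
  apply: near_lt; last by rewrite subrr normr0.
  have h1 : (fun x : 'rV[R]_2 => x - x0) @ x0 --> x0 - x0.
    apply: (@cvgB _ _ _ _ (nbhs_filter x0)); [exact: cvg_id | exact: cvg_cst].
  apply: (continuous_comp h1); exact: norm_continuous.
move: nPhi nN; apply: filterS2 => x hP hx.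
have gC : {within `[- sg, sg], continuous (fun s => tau (x - x0, s))}.
  apply: continuous_in_subspaceT => y.
  rewrite in_setE /= in_itv /= => /andP[ya yb].
  apply: gcont; rewrite hn gt_max hx /= ltr_norml; apply/andP; split; lra.
have hv : Num.min (tau (x - x0, - sg)) (tau (x - x0, sg)) <= 0 <=
          Num.max (tau (x - x0, - sg)) (tau (x - x0, sg)).
  by apply: minmax_neg; rewrite mulrC.
have [c hc E] := IVT (a := - sg) (b := sg) ltac:(lra) gC hv.
move: hc; rewrite in_itv /= => /andP[c1 c2].
have := graph (x - x0) c ltac:(rewrite hn gt_max hx /= ltr_norml; apply/andP; split; lra).
rewrite E scale0r addr0 mul0r addr0.
have -> : x0 + (x - x0) = x by rewrite addrC subrK.
move=> ->.
rewrite opprD addrA subrr sub0r normrN ler_norml; apply/andP; split; lra.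
Qed.

End Core.
Lemma f_cont (R : realType) (M : set (Amb R)) (f : Vth R -> R)
  (hM : IRHS M) (hf : forall x y, M (x, y) <-> y = f x) (x0 : 'rV[R]_2) :
  {for x0, continuous f}.
Proof.
case: hM => _ hS _.
have Mp : M (x0, f x0) by rewrite hf.
have [U [F [oU Up sF hZ hD]]] := hS _ Mp.
have [w hw] := hD _ Up Mp.
set D := derive F (x0, f x0) w.
have Fc : forall q, U q -> {for q, continuous F} := fun q Uq => (sF [::] q Uq).1.
have Fd : forall q, U q -> derivable F q w := fun q Uq => (sF [::] q Uq).2 w.
have Fdc : forall q, U q -> {for q, continuous (fun x => derive F x w)}
  := fun q Uq => (sF [:: w] q Uq).1.
have nU : \forall q \near (x0, f x0), U q.
  by move: oU; rewrite openE => /(_ _ Up).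
have nD : \forall q \near (x0, f x0), 0 < D * derive F q w.
  apply: near_gt; last by rewrite -/D -expr2 lt0r sqr_ge0 expf_neq0.
  apply: cvgM; [exact: cvg_cst | exact: Fdc _ Up].
have [r0 r0p hr] : exists2 r0, 0 < r0 & forall q, `|(x0, f x0) - q| < r0 ->
    U q /\ 0 < D * derive F q w.
  have : \forall q \near (x0, f x0), U q /\ 0 < D * derive F q w.
    by move: nU nD; apply: filterS2 => q a b; split.
  by move=> /nbhs_normP [e /= e0 he]; exists e => // q hq; apply: he.
apply: (@core_cont R M f hf (fun q => D * F q) w x0 r0 r0p).
- move=> q hq; have [Uq _] := hr q hq.
  apply: cvgM; [exact: cvg_cst | exact: Fc].
- move=> q hq; have [Uq pos] := hr q hq.
  split; first exact: (derivableZ (k:=D) (Fd _ Uq)).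
  have -> : derive (fun q0 => D * F q0) q w = D * derive F q w.
    exact: (deriveZ D (Fd _ Uq)).
  exact: pos.
- move=> q hq; have [Uq _] := hr q hq.
  have hz := hZ q Uq.
  split.
  + by move=> /hz ->; rewrite mulr0.
  + move=> /eqP; rewrite mulf_eq0 (negbTE hw) /= => /eqP; exact: (proj2 hz).
Qed.
Lemma fmono (R : realType) (M : set (Amb R)) (f : Vth R -> R)
  (hM : IRHS M) (hf : forall x y, M (x, y) <-> y = f x) (w v : 'rV[R]_2) :
  (forall l m : R, l <= m -> f (w + l *: v) <= f (w + m *: v)) \/
  (forall l m : R, l <= m -> f (w + m *: v) <= f (w + l *: v)).
Proof.
case: hM => _ _ hL; have [g [hg hmo]] := hL v w.
have E : forall l, f (w + l *: v) = g (w + l *: v).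
  move=> l; apply: (hg (w + l *: v) (ex_intro _ l erefl) (f _)).1.
  by rewrite hf.
by case: hmo => h; [left|right] => l m hlm; rewrite !E; exact: h.
Qed.

Lemma conn01 (R : realType) (P Q : R -> Prop) :
  (forall t, P t -> \forall s \near t, P s) ->
  (forall t, Q t -> \forall s \near t, Q s) ->
  (forall t, 0 <= t <= 1 -> P t \/ Q t) ->
  (forall t, ~ (P t /\ Q t)) -> P 0 -> P 1.
Proof.
move=> oP oQ cov dis P0.
have hc := @segment_connected R 0 1.
have opP : open P by rewrite openE => t Pt; exact: oP t Pt.
have opQ : open Q by rewrite openE => t Qt; exact: oQ t Qt.
have B := hc (`[0, 1]%classic `&` P).
have ne : (`[0, 1]%classic `&` P) !=set0.
  by exists 0; split => //=; rewrite in_itv /= lexx ler01.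
have e1 : exists2 C : set R, open C & `[0, 1]%classic `&` P = `[0, 1]%classic `&` C.
  by exists P.
have e2 : exists2 C : set R, closed C & `[0, 1]%classic `&` P = `[0, 1]%classic `&` C.
  exists (~` Q); first exact: open_closedC.
  apply/seteqP; split => t [ht H]; split => //.
  - by move=> Qt; apply: (dis t).
  - move: ht => /=; rewrite in_itv /= => ht.
    by case: (cov t ht).
have := B ne e1 e2.
move=> EE.
have : (`[0, 1]%classic `&` P) 1 by rewrite EE /= in_itv /= lexx ler01.
by case.
Qed.
Theorem lemma1 (R : realType) (M : set (Amb R)) (f : Vth R -> R)
  (hM : IRHS M) (hf : forall x y, M (x, y) <-> y = f x) :
  exists v : Vth R, v != 0 /\ forall lam mu : R, f (lam *: v) = f (mu *: v).
Proof.
have fc : forall x0, {for x0, continuous f} := @f_cont R M f hM hf.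
have mono0 : forall v : 'rV[R]_2,
    (forall l m : R, l <= m -> f (l *: v) <= f (m *: v)) \/
    (forall l m : R, l <= m -> f (m *: v) <= f (l *: v)).
  move=> v; case: (@fmono R M f hM hf 0 v) => h; [left|right] => l m hlm;
    by have := h l m hlm; rewrite !add0r.
pose inc (v : 'rV[R]_2) := exists t s : R, t < s /\ f (t *: v) < f (s *: v).
pose dec (v : 'rV[R]_2) := exists t s : R, t < s /\ f (s *: v) < f (t *: v).
have excl : forall v, ~ (inc v /\ dec v).
  move=> v [[t [s [ts h1]]] [t' [s' [ts' h2]]]]; case: (mono0 v) => h.
  - by have := h _ _ (ltW ts'); rewrite leNgt h2.
  - by have := h _ _ (ltW ts); rewrite leNgt h1.
have neg : forall v, inc v -> dec (- v).
  move=> v [t [s [ts h]]]; exists (-s), (-t); split; first by rewrite ltrN2.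
  by rewrite !scalerN !scaleNr !opprK.
have neg' : forall v, dec v -> inc (- v).
  move=> v [t [s [ts h]]]; exists (-s), (-t); split; first by rewrite ltrN2.
  by rewrite !scalerN !scaleNr !opprK.
case: (pselect (exists v : Vth R, v != 0 /\
   forall lam mu : R, f (lam *: v) = f (mu *: v))) => // hno; exfalso.
have cov : forall v : 'rV[R]_2, v != 0 -> inc v \/ dec v.
  move=> v v0.
  have : ~ (forall lam mu : R, f (lam *: v) = f (mu *: v)).
    by move=> h; apply: hno; exists v.
  move=> /existsNP [l /existsNP [m hlm]].
  case: (ltgtP l m) => [lm|ml|lm]; last by rewrite lm in hlm.
  - case: (ltgtP (f (l *: v)) (f (m *: v))) => a.
    + by left; exists l, m.
    + by right; exists l, m.
    + by [].
  - case: (ltgtP (f (l *: v)) (f (m *: v))) => a.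
    + by right; exists m, l.
    + by left; exists m, l.
    + by [].
pose e1 : 'rV[R]_2 := delta_mx 0 0.
pose e2 : 'rV[R]_2 := delta_mx 0 ord_max.
pose g (th : R) : 'rV[R]_2 := (1 - 2 * th) *: e1 + (4 * th * (1 - th)) *: e2.
have gc : forall th, {for th, continuous g}.
  move=> th; apply: cvgD; apply: cvgZl.
  - by apply: cvgB; [exact: cvg_cst | apply: cvgM; [exact: cvg_cst | exact: cvg_id]].
  - apply: cvgM; last by apply: cvgB; [exact: cvg_cst | exact: cvg_id].
    by apply: cvgM; [exact: cvg_cst | exact: cvg_id].
have gnz : forall th, g th != 0.
  move=> th; apply/eqP => h.
  have h1 := congr1 (fun m : 'rV[R]_2 => m ord0 ord0) h.
  have h2 := congr1 (fun m : 'rV[R]_2 => m ord0 ord_max) h.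
  move: h1 h2; rewrite /g /e1 /e2 !mxE /= !mulr1 !mulr0 !addr0 !add0r => h1 h2.
  suff : (0:R) < 0 by rewrite ltxx.
  nra.
have g0 : g 0 = e1 by rewrite /g !mulr0 subr0 mul0r scale1r scale0r addr0.
have g1 : g 1 = - e1.
  rewrite /g subrr !mulr0 scale0r addr0 mulr1.
  have -> : (1 - 2 : R) = -1 by lra.
  by rewrite scaleN1r.
have oinc : forall th, inc (g th) -> \forall s \near th, inc (g s).
  move=> th [t [s [ts h]]].
  have hc : {for th, continuous (fun th' => f (s *: g th') - f (t *: g th'))}.
    have hs : forall a : R, {for th, continuous (fun th' => a *: g th')}.
      by move=> a; apply: cvgZr; exact: gc.
    apply: cvgB.
    - exact: (continuous_comp (hs _) (fc _)).
    - exact: (continuous_comp (hs _) (fc _)).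
  have := near_gt hc (_ : 0 < _); rewrite subr_gt0 => /(_ h).
  by apply: filterS => th' h'; exists t, s; split => //; rewrite -subr_gt0.
have odec : forall th, dec (g th) -> \forall s \near th, dec (g s).
  move=> th [t [s [ts h]]].
  have hc : {for th, continuous (fun th' => f (t *: g th') - f (s *: g th'))}.
    have hs : forall a : R, {for th, continuous (fun th' => a *: g th')}.
      by move=> a; apply: cvgZr; exact: gc.
    apply: cvgB.
    - exact: (continuous_comp (hs _) (fc _)).
    - exact: (continuous_comp (hs _) (fc _)).
  have := near_gt hc (_ : 0 < _); rewrite subr_gt0 => /(_ h).
  by apply: filterS => th' h'; exists t, s; split => //; rewrite -subr_gt0.
have e1nz : e1 != 0 by rewrite -g0.
case: (cov e1 e1nz) => [hi|hd].
- have P0 : inc (g 0) by rewrite g0.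
  have := @conn01 R (fun th => inc (g th)) (fun th => dec (g th)) oinc odec
    (fun th _ => cov _ (gnz th)) (fun th => excl (g th)) P0.
  rewrite /= g1 => /neg; rewrite opprK => hd.
  exact: (excl e1).
- have P0 : dec (g 0) by rewrite g0.
  have cov' : forall th : R, 0 <= th <= 1 -> dec (g th) \/ inc (g th).
    by move=> th _; case: (cov _ (gnz th)); [right|left].
  have excl' : forall th : R, ~ (dec (g th) /\ inc (g th)).
    by move=> th [a b]; apply: (excl (g th)).
  have := @conn01 R (fun th => dec (g th)) (fun th => inc (g th)) odec oinc
    cov' excl' P0.
  rewrite /= g1 => /neg'; rewrite opprK => hi.
  exact: (excl e1).
Qed.
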